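(* Let $\epsilon<1$ be a constant. For any instance oracle $f$ with $\max\{|f(G,v)|: G \text{ an } n\text{-node graph}, v\in G\}=o(n\log n)$ and any deterministic exploration algorithm $A$, for infinitely many $n$ there exist an $n$-node hamiltonian graph $G$ and a starting node $v$ such that the agent executing $A$ with input $f(G,v)$ from $v$ makes at least $n+n^{\epsilon}$ edge traversals before it has visited all nodes and stopped (or fails to explore $G$).
   Context: Model: a graph is a simple connected undirected graph with $n$ nodes. Nodes are unlabeled; at each node of degree $d$ the incident edges carry distinct port numbers $0,\dots,d-1$, arbitrarily assigned. A mobile agent starts at some node. At each step, located at a node $u$ whose degree it knows, it chooses a port at $u$ and traverses the corresponding edge to a neighbor $w$; upon arrival it learns the port number of this edge at $w$ and the degree of $w$. The agent must visit all nodes and stop; the time of exploration is the number of edge traversals. A deterministic exploration algorithm receives as input a binary string (advice); its size is its length. An instance oracle is a function assigning a binary string $f(G,v)$ to each pair $(G,v)$ where $G$ is a port-numbered graph and $v$ is the starting node of the agent. A graph is hamiltonian if it has a cycle through all its nodes. Logarithms are to base 2. *)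

(* Defs.v *)
From Stdlib Require Import Reals List Arith Relations.
Import ListNotations.
Open Scope R_scope.

(* Node u has degree [deg u]; the edge with port p at u (p < deg u) leads to
   node [nbr u p], where this same edge has port [bport u p].
   Values outside the meaningful range are junk and are never read by the agent. *)
Record pgraph (n : nat) := {
  deg : nat -> nat;
  nbr : nat -> nat -> nat;
  bport : nat -> nat -> nat;
  pg_nbr_lt : forall u p, (u < n)%nat -> (p < deg u)%nat -> (nbr u p < n)%nat;
  pg_bport_lt : forall u p, (u < n)%nat -> (p < deg u)%nat ->
      (bport u p < deg (nbr u p))%nat;
  pg_back_nbr : forall u p, (u < n)%nat -> (p < deg u)%nat ->
      nbr (nbr u p) (bport u p) = u;
  pg_back_port : forall u p, (u < n)%nat -> (p < deg u)%nat ->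
      bport (nbr u p) (bport u p) = p;
  pg_noloop : forall u p, (u < n)%nat -> (p < deg u)%nat -> nbr u p <> u;
  pg_simple : forall u p q, (u < n)%nat -> (p < deg u)%nat -> (q < deg u)%nat ->
      nbr u p = nbr u q -> p = q;
  pg_connected : forall u w, (u < n)%nat -> (w < n)%nat ->
      clos_refl_trans nat
        (fun x y => (x < n)%nat /\ exists p, (p < deg x)%nat /\ nbr x p = y) u w
}.
Arguments deg {n}.
Arguments nbr {n}.
Arguments bport {n}.

Definition adj {n} (G : pgraph n) (u w : nat) : Prop :=
  (u < n)%nat /\ exists p, (p < deg G u)%nat /\ nbr G u p = w.

Definition hamiltonian {n} (G : pgraph n) : Prop :=
  (3 <= n)%nat /\
  exists l : list nat, length l = n /\ NoDup l /\ Forall (fun u => (u < n)%nat) l /\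
    forall i, (i < n)%nat -> adj G (nth i l 0%nat) (nth ((i + 1) mod n) l 0%nat).

Definition advice := list bool.
Definition oracle := forall n, pgraph n -> nat -> advice.

(* Deterministic exploration algorithm: given the advice, the degree of the
   starting node and the history of observations (port taken, port of arrival,
   degree of arrival node), it either stops or takes a port. *)
Inductive action := Stop | Go (p : nat).
Definition algorithm := advice -> nat -> list (nat * nat * nat) -> action.

(* State after k edge traversals: current node, history, visited nodes
   (None if the agent stopped earlier or chose a non-existent port). *)
Fixpoint run {n} (A : algorithm) (adv : advice) (G : pgraph n) (v : nat) (k : nat)
  : option (nat * list (nat * nat * nat) * list nat) :=
  match k with
  | O => Some (v, [], [v])
  | S k' =>
    match run A adv G v k' with
    | None => None
    | Some (u, h, vis) =>
      match A adv (deg G v) h with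
      | Stop => None
      | Go p =>
        if Nat.ltb p (deg G u) then
          let w := nbr G u p in
          Some (w, h ++ [(p, bport G u p, deg G w)], vis ++ [w])
        else None
      end
    end
  end.

Definition explores_in {n} (A : algorithm) (adv : advice) (G : pgraph n) (v : nat)
  (k : nat) : Prop :=
  exists u h vis, run A adv G v k = Some (u, h, vis) /\
    A adv (deg G v) h = Stop /\
    forall x, (x < n)%nat -> In x vis.

Definition advice_o_nlogn (f : oracle) : Prop :=
  forall c : R, 0 < c -> exists N : nat, forall n : nat, (N <= n)%nat ->
    forall (G : pgraph n) (v : nat), (v < n)%nat ->
      INR (length (f n G v)) <= c * INR n * (ln (INR n) / ln 2).

(* Main.v *)
Require Import Defs.
From Stdlib Require Import Reals List Arith Lia Lra Relations Classical IndefiniteDescription.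
Import ListNotations.
Open Scope nat_scope.

Definition skip (e p : nat) := if p <? e then p else p - 1.
Definition unskip (e j : nat) := if j <? e then j else S j.

Lemma unskip_skip e p : p <> e -> unskip e (skip e p) = p.
Proof. unfold skip, unskip; intros; destruct (p <? e) eqn:E1;
  [rewrite E1; auto|]; apply Nat.ltb_ge in E1; destruct (p - 1 <? e) eqn:E2;
  [apply Nat.ltb_lt in E2; lia| lia]. Qed.
Lemma skip_unskip e j : skip e (unskip e j) = j.
Proof. unfold skip, unskip; destruct (j <? e) eqn:E1; [rewrite E1; auto|].
  apply Nat.ltb_ge in E1. destruct (S j <? e) eqn:E2; [apply Nat.ltb_lt in E2; lia| lia]. Qed.
Lemma unskip_ne e j : unskip e j <> e.
Proof. unfold unskip; destruct (j <? e) eqn:E1; [apply Nat.ltb_lt in E1|apply Nat.ltb_ge in E1]; lia. Qed.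
Lemma skip_lt e p B : p < B -> e < B -> p <> e -> skip e p < B - 1.
Proof. unfold skip; destruct (p <? e) eqn:E1; [apply Nat.ltb_lt in E1|apply Nat.ltb_ge in E1]; lia. Qed.
Lemma unskip_lt e j B : j < B - 1 -> unskip e j < B.
Proof. unfold unskip; destruct (j <? e) eqn:E1; lia. Qed.
Lemma skip_inj e p q : p <> e -> q <> e -> skip e p = skip e q -> p = q.
Proof. intros; rewrite <- (unskip_skip e p), <- (unskip_skip e q); auto; congruence. Qed.
Lemma unskip_inj e i j : unskip e i = unskip e j -> i = j.
Proof. intros; rewrite <- (skip_unskip e i), <- (skip_unskip e j); congruence. Qed.
Lemma skip_le e p : skip e p <= p.
Proof. unfold skip; destruct (p <? e); lia. Qed.
Lemma unskip_le e j : unskip e j <= S j.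
Proof. unfold unskip; destruct (j <? e); lia. Qed.

Section Graph.
Variables (h m : nat) (phi : list nat).
Hypotheses (Hh : 2 <= h) (Hm : 4 <= m) (He : Nat.even m = true).

Definition ss := 2 * h - 2.
Definition nn := m + ss.
Definition cc i := if Nat.even i then nth i phi 0 mod h else h + nth i phi 0 mod h.
Definition sc i := if i + 1 =? m then 0 else i + 1.
Definition pr i := if i =? 0 then m - 1 else i - 1.
Definition lo i := if Nat.even i then cc i else cc (pr i).
Definition hi i := if Nat.even i then cc (pr i) else cc i.
Definition kidx i p := if p <? h then skip (lo i) p else (h - 1) + skip (hi i - h) (p - h).
Definition kport i j := if j <? h - 1 then unskip (lo i) j else h + unskip (hi i - h) (j - (h - 1)).
Definition degf u := if u <? m then 2 * h else m + ss - 1.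
Definition nbrf u p :=
  if u <? m then (if p =? cc u then sc u else if p =? cc (pr u) then pr u else m + kidx u p)
  else (if p <? m then p else m + unskip (u - m) (p - m)).
Definition bportf u p :=
  if u <? m then (if p =? cc u then cc u else if p =? cc (pr u) then cc (pr u) else u)
  else (if p <? m then kport p (u - m) else m + skip (unskip (u - m) (p - m)) (u - m)).

Lemma sc_lt i : i < m -> sc i < m.
Proof. unfold sc; destruct (i + 1 =? m) eqn:E; [|apply Nat.eqb_neq in E]; lia. Qed.
Lemma pr_lt i : i < m -> pr i < m.
Proof. unfold pr; destruct (i =? 0) eqn:E; [|apply Nat.eqb_neq in E]; lia. Qed.
Lemma pr_sc i : i < m -> pr (sc i) = i.
Proof. unfold sc, pr; destruct (i + 1 =? m) eqn:E; [apply Nat.eqb_eq in E|apply Nat.eqb_neq in E].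
  simpl; lia. destruct (i + 1 =? 0) eqn:E2; [apply Nat.eqb_eq in E2|]; lia. Qed.
Lemma sc_pr i : i < m -> sc (pr i) = i.
Proof. unfold sc, pr; destruct (i =? 0) eqn:E; [apply Nat.eqb_eq in E|apply Nat.eqb_neq in E].
  - rewrite (proj2 (Nat.eqb_eq _ _)); lia.
  - destruct (i - 1 + 1 =? m) eqn:E2; [apply Nat.eqb_eq in E2|]; lia. Qed.
Lemma sc_ne i : i < m -> sc i <> i.
Proof. unfold sc; destruct (i + 1 =? m) eqn:E; [apply Nat.eqb_eq in E|]; lia. Qed.
Lemma pr_ne i : i < m -> pr i <> i.
Proof. unfold pr; destruct (i =? 0) eqn:E; [apply Nat.eqb_eq in E|apply Nat.eqb_neq in E]; lia. Qed.
Lemma sc_ne_pr i : i < m -> sc i <> pr i.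
Proof. unfold sc, pr; destruct (i + 1 =? m) eqn:E; [apply Nat.eqb_eq in E|apply Nat.eqb_neq in E];
  destruct (i =? 0) eqn:E2; [apply Nat.eqb_eq in E2|apply Nat.eqb_neq in E2|apply Nat.eqb_eq in E2|apply Nat.eqb_neq in E2]; lia. Qed.

Lemma even_pr i : i < m -> Nat.even (pr i) = negb (Nat.even i).
Proof. intro Hi. unfold pr. destruct (i =? 0) eqn:E; [apply Nat.eqb_eq in E|apply Nat.eqb_neq in E].
  - subst. replace (m - 1) with (Nat.pred m) by lia. rewrite Nat.even_pred by lia.
    rewrite <- Nat.negb_even, He. reflexivity.
  - replace (i - 1) with (Nat.pred i) by lia. rewrite Nat.even_pred by lia. apply eq_sym, Nat.negb_even. Qed.
Lemma even_sc i : i < m -> Nat.even (sc i) = negb (Nat.even i).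
Proof. intro Hi. rewrite <- (pr_sc i Hi) at 2. rewrite even_pr by (apply sc_lt; auto).
  destruct (Nat.even (sc i)); reflexivity. Qed.

Lemma cc_even i : Nat.even i = true -> cc i < h.
Proof. unfold cc; intro E; rewrite E; apply Nat.mod_upper_bound; lia. Qed.
Lemma cc_odd i : Nat.even i = false -> h <= cc i < 2 * h.
Proof. unfold cc; intro E; rewrite E. pose proof (Nat.mod_upper_bound (nth i phi 0) h). lia. Qed.
Lemma cc_lt i : cc i < 2 * h.
Proof. destruct (Nat.even i) eqn:E; [pose proof (cc_even i E)|pose proof (cc_odd i E)]; lia. Qed.
Lemma lo_lt i : i < m -> lo i < h.
Proof. intro Hi; unfold lo; destruct (Nat.even i) eqn:E; [apply cc_even; auto|].
  apply cc_even. rewrite even_pr, E; auto. Qed.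
Lemma hi_bd i : i < m -> h <= hi i < 2 * h.
Proof. intro Hi; unfold hi; destruct (Nat.even i) eqn:E; [|apply cc_odd; auto].
  apply cc_odd. rewrite even_pr, E; auto. Qed.
Lemma cc_lohi i : (cc i = lo i /\ cc (pr i) = hi i) \/ (cc i = hi i /\ cc (pr i) = lo i).
Proof. unfold lo, hi; destruct (Nat.even i); auto. Qed.
Lemma cc_ne_pr i : i < m -> cc i <> cc (pr i).
Proof. intro Hi; pose proof (lo_lt i Hi); pose proof (hi_bd i Hi); destruct (cc_lohi i); lia. Qed.
Lemma cc_ne_sc i : i < m -> cc i <> cc (sc i).
Proof. intro Hi. pose proof (cc_ne_pr (sc i) (sc_lt i Hi)). rewrite pr_sc in H; auto. Qed.

Definition special i p := p <> cc i /\ p <> cc (pr i).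
Lemma special_lohi i p : special i p <-> p <> lo i /\ p <> hi i.
Proof. unfold special; destruct (cc_lohi i) as [[-> ->]|[-> ->]]; tauto. Qed.

Lemma kidx_lt i p : i < m -> p < 2 * h -> special i p -> kidx i p < ss.
Proof. intros Hi Hp Hs; apply special_lohi in Hs. pose proof (lo_lt i Hi); pose proof (hi_bd i Hi).
  unfold kidx, ss. destruct (p <? h) eqn:E; [apply Nat.ltb_lt in E|apply Nat.ltb_ge in E].
  - pose proof (skip_lt (lo i) p h); lia.
  - pose proof (skip_lt (hi i - h) (p - h) h); lia. Qed.
Lemma kport_lt i j : i < m -> j < ss -> kport i j < 2 * h.
Proof. intros Hi Hj; unfold kport, ss in *. pose proof (lo_lt i Hi); pose proof (hi_bd i Hi).
  destruct (j <? h - 1) eqn:E; [apply Nat.ltb_lt in E|apply Nat.ltb_ge in E].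
  - pose proof (unskip_le (lo i) j); lia.
  - pose proof (unskip_le (hi i - h) (j - (h-1))). lia. Qed.
Lemma kport_special i j : i < m -> j < ss -> special i (kport i j).
Proof. intros Hi Hj; apply special_lohi. unfold kport, ss in *. pose proof (lo_lt i Hi); pose proof (hi_bd i Hi).
  destruct (j <? h - 1) eqn:E; [apply Nat.ltb_lt in E|apply Nat.ltb_ge in E].
  - pose proof (unskip_le (lo i) j); pose proof (unskip_ne (lo i) j); lia.
  - pose proof (unskip_ne (hi i - h) (j - (h-1))). lia. Qed.
Lemma kidx_kport i j : i < m -> j < ss -> kidx i (kport i j) = j.
Proof. intros Hi Hj; unfold kport, kidx, ss in *. pose proof (lo_lt i Hi); pose proof (hi_bd i Hi).
  destruct (j <? h - 1) eqn:E; [apply Nat.ltb_lt in E|apply Nat.ltb_ge in E].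
  - pose proof (unskip_le (lo i) j). rewrite (proj2 (Nat.ltb_lt _ _)) by lia. apply skip_unskip.
  - rewrite (proj2 (Nat.ltb_ge _ _)) by lia. replace (h + unskip (hi i - h) (j - (h - 1)) - h)
      with (unskip (hi i - h) (j - (h - 1))) by lia. rewrite skip_unskip. lia. Qed.
Lemma kport_kidx i p : i < m -> p < 2 * h -> special i p -> kport i (kidx i p) = p.
Proof. intros Hi Hp Hs; apply special_lohi in Hs. pose proof (lo_lt i Hi); pose proof (hi_bd i Hi).
  unfold kport, kidx. destruct (p <? h) eqn:E; [apply Nat.ltb_lt in E|apply Nat.ltb_ge in E].
  - pose proof (skip_lt (lo i) p h). rewrite (proj2 (Nat.ltb_lt _ _)) by lia. apply unskip_skip; lia.
  - pose proof (skip_lt (hi i - h) (p - h) h). rewrite (proj2 (Nat.ltb_ge _ _)) by lia.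
    replace (h - 1 + skip (hi i - h) (p - h) - (h - 1)) with (skip (hi i - h) (p - h)) by lia.
    rewrite unskip_skip; lia. Qed.



Lemma degf_path u : u < m -> degf u = 2 * h.
Proof. intro; unfold degf; rewrite (proj2 (Nat.ltb_lt _ _)); auto. Qed.
Lemma degf_K u : m <= u -> degf u = m + ss - 1.
Proof. intro; unfold degf; rewrite (proj2 (Nat.ltb_ge _ _)); auto. Qed.

Lemma nbrf_path_sc u : u < m -> nbrf u (cc u) = sc u.
Proof. intro; unfold nbrf; rewrite (proj2 (Nat.ltb_lt _ _)), Nat.eqb_refl; auto. Qed.
Lemma nbrf_path_pr u : u < m -> nbrf u (cc (pr u)) = pr u.
Proof. intro Hu; unfold nbrf; rewrite (proj2 (Nat.ltb_lt _ _)) by auto.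
  rewrite (proj2 (Nat.eqb_neq _ _)) by (apply not_eq_sym, cc_ne_pr; auto). rewrite Nat.eqb_refl; auto. Qed.
Lemma nbrf_path_K u p : u < m -> special u p -> nbrf u p = m + kidx u p.
Proof. intros Hu [H1 H2]; unfold nbrf; rewrite (proj2 (Nat.ltb_lt _ _)) by auto.
  rewrite (proj2 (Nat.eqb_neq _ _)) by auto. rewrite (proj2 (Nat.eqb_neq _ _)) by auto. auto. Qed.
Lemma bportf_path_sc u : u < m -> bportf u (cc u) = cc u.
Proof. intro; unfold bportf; rewrite (proj2 (Nat.ltb_lt _ _)), Nat.eqb_refl; auto. Qed.
Lemma bportf_path_pr u : u < m -> bportf u (cc (pr u)) = cc (pr u).
Proof. intro Hu; unfold bportf; rewrite (proj2 (Nat.ltb_lt _ _)) by auto.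
  rewrite (proj2 (Nat.eqb_neq _ _)) by (apply not_eq_sym, cc_ne_pr; auto). rewrite Nat.eqb_refl; auto. Qed.
Lemma bportf_path_K u p : u < m -> special u p -> bportf u p = u.
Proof. intros Hu [H1 H2]; unfold bportf; rewrite (proj2 (Nat.ltb_lt _ _)) by auto.
  rewrite (proj2 (Nat.eqb_neq _ _)) by auto. rewrite (proj2 (Nat.eqb_neq _ _)) by auto. auto. Qed.
Lemma nbrf_K_path u p : m <= u -> p < m -> nbrf u p = p.
Proof. intros; unfold nbrf; rewrite (proj2 (Nat.ltb_ge _ _)), (proj2 (Nat.ltb_lt _ _)); auto. Qed.
Lemma bportf_K_path u p : m <= u -> p < m -> bportf u p = kport p (u - m).
Proof. intros; unfold bportf; rewrite (proj2 (Nat.ltb_ge _ _)), (proj2 (Nat.ltb_lt _ _)); auto. Qed.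
Lemma nbrf_K_K u p : m <= u -> m <= p -> nbrf u p = m + unskip (u - m) (p - m).
Proof. intros; unfold nbrf; rewrite (proj2 (Nat.ltb_ge _ _)), (proj2 (Nat.ltb_ge _ _)); auto. Qed.
Lemma bportf_K_K u p : m <= u -> m <= p -> bportf u p = m + skip (unskip (u - m) (p - m)) (u - m).
Proof. intros; unfold bportf; rewrite (proj2 (Nat.ltb_ge _ _)), (proj2 (Nat.ltb_ge _ _)); auto. Qed.

Lemma path_cases u p : u < m -> p = cc u \/ p = cc (pr u) \/ special u p.
Proof. unfold special; intros. destruct (Nat.eq_dec p (cc u)); auto. destruct (Nat.eq_dec p (cc (pr u))); auto. Qed.

Lemma ss_pos : 2 <= ss.
Proof. unfold ss; lia. Qed.

Lemma G_nbr_lt u p : u < nn -> p < degf u -> nbrf u p < nn.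
Proof. unfold nn; intros Hu Hp. destruct (Nat.lt_ge_cases u m) as [Hu'|Hu'].
  - rewrite degf_path in Hp by auto. destruct (path_cases u p Hu') as [->|[->|Hs]].
    + rewrite nbrf_path_sc by auto. pose proof (sc_lt u Hu'); lia.
    + rewrite nbrf_path_pr by auto. pose proof (pr_lt u Hu'); lia.
    + rewrite nbrf_path_K by auto. pose proof (kidx_lt u p Hu' Hp Hs); lia.
  - rewrite degf_K in Hp by auto. destruct (Nat.lt_ge_cases p m).
    + rewrite nbrf_K_path; auto; lia.
    + rewrite nbrf_K_K by auto. pose proof (unskip_lt (u - m) (p - m) ss). lia. Qed.

Lemma G_bport_lt u p : u < nn -> p < degf u -> bportf u p < degf (nbrf u p).
Proof. unfold nn; intros Hu Hp. destruct (Nat.lt_ge_cases u m) as [Hu'|Hu'].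
  - rewrite degf_path in Hp by auto. destruct (path_cases u p Hu') as [->|[->|Hs]].
    + rewrite nbrf_path_sc, bportf_path_sc, degf_path by (auto; apply sc_lt; auto). apply cc_lt.
    + rewrite nbrf_path_pr, bportf_path_pr, degf_path by (auto; apply pr_lt; auto). apply cc_lt.
    + rewrite nbrf_path_K, bportf_path_K, degf_K by (auto; lia). pose proof ss_pos; lia.
  - rewrite degf_K in Hp by auto. destruct (Nat.lt_ge_cases p m).
    + rewrite nbrf_K_path, bportf_K_path, degf_path by auto. apply kport_lt; auto; lia.
    + rewrite nbrf_K_K, bportf_K_K, degf_K by (auto; lia).
      pose proof (unskip_lt (u - m) (p - m) ss). pose proof (unskip_ne (u - m) (p - m)).
      pose proof (skip_lt (unskip (u - m) (p - m)) (u - m) ss). lia. Qed.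

Lemma G_back_nbr u p : u < nn -> p < degf u -> nbrf (nbrf u p) (bportf u p) = u.
Proof. unfold nn; intros Hu Hp. destruct (Nat.lt_ge_cases u m) as [Hu'|Hu'].
  - rewrite degf_path in Hp by auto. destruct (path_cases u p Hu') as [->|[->|Hs]].
    + rewrite nbrf_path_sc, bportf_path_sc by auto.
      pose proof (nbrf_path_pr (sc u) (sc_lt u Hu')). rewrite pr_sc in H; auto.
    + rewrite nbrf_path_pr, bportf_path_pr by auto.
      rewrite nbrf_path_sc by (apply pr_lt; auto). apply sc_pr; auto.
    + rewrite (nbrf_path_K u p), bportf_path_K by auto. rewrite nbrf_K_path by lia. auto.
  - rewrite degf_K in Hp by auto. destruct (Nat.lt_ge_cases p m).
    + rewrite (nbrf_K_path u p), bportf_K_path by auto.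
      assert (Hs : special p (kport p (u - m))) by (apply kport_special; auto; unfold ss in *; lia).
      rewrite nbrf_path_K by auto. rewrite kidx_kport by (auto; unfold ss in *; lia). lia.
    + rewrite (nbrf_K_K u p), bportf_K_K by auto. rewrite nbrf_K_K by lia.
      replace (m + unskip (u - m) (p - m) - m) with (unskip (u - m) (p - m)) by lia.
      replace (m + skip (unskip (u - m) (p - m)) (u - m) - m) with (skip (unskip (u - m) (p - m)) (u - m)) by lia.
      rewrite unskip_skip. lia. apply not_eq_sym, unskip_ne. Qed.

Lemma G_back_port u p : u < nn -> p < degf u -> bportf (nbrf u p) (bportf u p) = p.
Proof. unfold nn; intros Hu Hp. destruct (Nat.lt_ge_cases u m) as [Hu'|Hu'].
  - rewrite degf_path in Hp by auto. destruct (path_cases u p Hu') as [->|[->|Hs]].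
    + rewrite nbrf_path_sc, bportf_path_sc by auto.
      pose proof (bportf_path_pr (sc u) (sc_lt u Hu')). rewrite pr_sc in H; auto.
    + rewrite nbrf_path_pr, bportf_path_pr by auto.
      rewrite bportf_path_sc by (apply pr_lt; auto). auto.
    + rewrite (nbrf_path_K u p), (bportf_path_K u p) by auto. rewrite bportf_K_path by lia.
      replace (m + kidx u p - m) with (kidx u p) by lia. apply kport_kidx; auto.
  - rewrite degf_K in Hp by auto. destruct (Nat.lt_ge_cases p m).
    + rewrite (nbrf_K_path u p), (bportf_K_path u p) by auto. rewrite bportf_path_K; auto.
      apply kport_special; auto; unfold ss in *; lia.
    + rewrite (nbrf_K_K u p), (bportf_K_K u p) by auto. rewrite bportf_K_K by lia.
      replace (m + unskip (u - m) (p - m) - m) with (unskip (u - m) (p - m)) by lia.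
      replace (m + skip (unskip (u - m) (p - m)) (u - m) - m) with (skip (unskip (u - m) (p - m)) (u - m)) by lia.
      rewrite unskip_skip. rewrite skip_unskip. lia. apply not_eq_sym, unskip_ne. Qed.

Lemma G_noloop u p : u < nn -> p < degf u -> nbrf u p <> u.
Proof. unfold nn; intros Hu Hp. destruct (Nat.lt_ge_cases u m) as [Hu'|Hu'].
  - rewrite degf_path in Hp by auto. destruct (path_cases u p Hu') as [->|[->|Hs]].
    + rewrite nbrf_path_sc by auto. apply sc_ne; auto.
    + rewrite nbrf_path_pr by auto. apply pr_ne; auto.
    + rewrite nbrf_path_K by auto. lia.
  - rewrite degf_K in Hp by auto. destruct (Nat.lt_ge_cases p m).
    + rewrite nbrf_K_path by auto. lia.
    + rewrite nbrf_K_K by auto. pose proof (unskip_ne (u - m) (p - m)). lia. Qed.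

Lemma G_simple u p q : u < nn -> p < degf u -> q < degf u -> nbrf u p = nbrf u q -> p = q.
Proof. unfold nn; intros Hu Hp Hq E. destruct (Nat.lt_ge_cases u m) as [Hu'|Hu'].
  - rewrite degf_path in Hp, Hq by auto. pose proof (sc_ne_pr u Hu'). pose proof (sc_lt u Hu'). pose proof (pr_lt u Hu').
    destruct (path_cases u p Hu') as [->|[->|Hs]]; destruct (path_cases u q Hu') as [->|[->|Hs']]; auto;
    repeat first [rewrite nbrf_path_sc in E by auto | rewrite nbrf_path_pr in E by auto | rewrite nbrf_path_K in E by auto];
    try lia.
    assert (kidx u p = kidx u q) by lia. rewrite <- (kport_kidx u p), <- (kport_kidx u q); auto; congruence.
  - rewrite degf_K in Hp, Hq by auto. destruct (Nat.lt_ge_cases p m); destruct (Nat.lt_ge_cases q m);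
    repeat first [rewrite nbrf_K_path in E by auto | rewrite nbrf_K_K in E by auto]; try lia.
    assert (unskip (u - m) (p - m) = unskip (u - m) (q - m)) by lia. apply unskip_inj in H1. lia. Qed.

Definition Rel x y := x < nn /\ exists p, p < degf x /\ nbrf x p = y.

Lemma reach_to0 u : u < nn -> clos_refl_trans nat Rel u 0.
Proof. unfold nn; intros Hu. destruct (Nat.lt_ge_cases u m) as [Hu'|Hu'].
  - induction u as [|u IH]. apply rt_refl. eapply rt_trans; [|apply IH; lia].
    apply rt_step. split. unfold nn; lia. exists (cc (pr (S u))). split. rewrite degf_path by auto. apply cc_lt.
    rewrite nbrf_path_pr by auto. unfold pr; simpl. lia.
  - apply rt_step. split. unfold nn; lia. exists 0. split. rewrite degf_K by auto. unfold ss; lia.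
    rewrite nbrf_K_path; lia. Qed.

Lemma reach_from0 u : u < nn -> clos_refl_trans nat Rel 0 u.
Proof. unfold nn; intros Hu. destruct (Nat.lt_ge_cases u m) as [Hu'|Hu'].
  - induction u as [|u IH]. apply rt_refl. eapply rt_trans; [apply IH; lia|].
    apply rt_step. split. unfold nn; lia. exists (cc u). split. rewrite degf_path by lia. apply cc_lt.
    rewrite nbrf_path_sc by lia. unfold sc. rewrite (proj2 (Nat.eqb_neq _ _)); lia.
  - apply rt_step. split. unfold nn; lia. exists (kport 0 (u - m)). split. rewrite degf_path by lia.
    apply kport_lt; lia. rewrite nbrf_path_K. rewrite kidx_kport; lia. lia. apply kport_special; lia. Qed.

Lemma G_connected u w : u < nn -> w < nn -> clos_refl_trans nat Rel u w.
Proof. intros; eapply rt_trans; [apply reach_to0|apply reach_from0]; auto. Qed.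

End Graph.

Definition mkG h m phi (Hh : 2 <= h) (Hm : 4 <= m) (He : Nat.even m = true) : pgraph (nn h m) :=
  {| deg := degf h m; nbr := nbrf h m phi; bport := bportf h m phi;
     pg_nbr_lt := G_nbr_lt h m phi Hh Hm He;
     pg_bport_lt := G_bport_lt h m phi Hh Hm He;
     pg_back_nbr := G_back_nbr h m phi Hh Hm He;
     pg_back_port := G_back_port h m phi Hh Hm He;
     pg_noloop := G_noloop h m phi Hh Hm He;
     pg_simple := G_simple h m phi Hh Hm He;
     pg_connected := G_connected h m phi Hh Hm He |}.

Lemma mkG_ham h m phi Hh Hm He : hamiltonian (mkG h m phi Hh Hm He).
Proof.
  split. unfold nn, ss; lia.
  exists (seq 0 (nn h m)). split. apply length_seq. split. apply seq_NoDup.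
  split. apply Forall_forall; intros x Hx; apply in_seq in Hx; lia.
  intros i Hi. unfold nn, ss in *.
  rewrite seq_nth by lia.
  assert (Hmod : (i + 1) mod (m + (2 * h - 2)) = if i + 1 =? m + (2*h-2) then 0 else i + 1).
  { destruct (i + 1 =? m + (2 * h - 2)) eqn:E; [apply Nat.eqb_eq in E; rewrite E; apply Nat.Div0.mod_same; lia|
      apply Nat.eqb_neq in E; apply Nat.mod_small; lia]. }
  rewrite Hmod. unfold adj; cbn [deg nbr mkG].
  destruct (i + 1 =? m + (2 * h - 2)) eqn:E; [apply Nat.eqb_eq in E|apply Nat.eqb_neq in E].
  - rewrite seq_nth by lia. split. unfold nn, ss; lia. exists 0. rewrite (degf_K h m) by lia. split. unfold ss; lia.
    rewrite (nbrf_K_path h m); lia.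
  - rewrite seq_nth by lia. split. unfold nn, ss; lia.
    destruct (Nat.lt_ge_cases (i + 1) m) as [H1|H1].
    + exists (cc h phi i). rewrite (degf_path h m) by lia. split. apply (cc_lt h m phi Hh Hm).
      rewrite (nbrf_path_sc h m) by lia. unfold sc. rewrite (proj2 (Nat.eqb_neq _ _)); lia.
    + destruct (Nat.eq_dec (i + 1) m) as [H2|H2].
      * exists (kport h m phi i 0). rewrite (degf_path h m) by lia. split. apply (kport_lt h m phi Hh Hm He); unfold ss; lia.
        rewrite (nbrf_path_K h m). rewrite (kidx_kport h m phi Hh Hm He); unfold ss; lia. lia.
        apply (kport_special h m phi Hh Hm He); unfold ss; lia.
      * exists i. rewrite (degf_K h m) by lia. split. unfold ss; lia.
        rewrite (nbrf_K_K h m) by lia. replace (i - m) with (i - m) by lia. unfold unskip.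
        rewrite Nat.ltb_irrefl. lia.
Qed.

Section Run.
Variables (n : nat) (G : pgraph n) (A : algorithm) (adv : advice) (v : nat).

Definition rn j := run A adv G v j.
Definition pos j := match rn j with Some (u, _, _) => u | None => v end.
Definition port j := match rn j with
  | Some (_, hh, _) => match A adv (deg G v) hh with Go p => p | Stop => 0 end
  | None => 0 end.

Lemma run_step j w hh' vis' : rn (S j) = Some (w, hh', vis') ->
  exists u hh vis p, rn j = Some (u, hh, vis) /\ A adv (deg G v) hh = Go p /\ p < deg G u /\
    w = nbr G u p /\ hh' = hh ++ [(p, bport G u p, deg G w)] /\ vis' = vis ++ [w].
Proof. unfold rn; simpl. destruct (run A adv G v j) as [[[u hh] vis]|]; [|discriminate].
  destruct (A adv (deg G v) hh) as [|p] eqn:EA; [discriminate|].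
  destruct (p <? deg G u) eqn:Ep; [|discriminate]. intro E; injection E; intros; subst.
  exists u, hh, vis, p. apply Nat.ltb_lt in Ep. repeat split; auto. Qed.

Lemma run_some_le j k : j <= k -> rn k <> None -> rn j <> None.
Proof. induction 1; auto. intro H'. apply IHle. destruct (rn (S m)) as [[[w hh'] vis']|] eqn:E; [|congruence].
  destruct (run_step _ _ _ _ E) as (u & hh & vis & p & E1 & _). congruence. Qed.

Lemma pos_S j : rn (S j) <> None -> pos (S j) = nbr G (pos j) (port j) /\ port j < deg G (pos j).
Proof. intro H. destruct (rn (S j)) as [[[w hh'] vis']|] eqn:E; [|congruence].
  destruct (run_step _ _ _ _ E) as (u & hh & vis & p & E1 & E2 & E3 & E4 & _).
  unfold pos, port. rewrite E, E1, E2. auto. Qed.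

Lemma vis_pos j u hh vis : rn j = Some (u, hh, vis) -> vis = map pos (seq 0 (S j)) /\ u = pos j.
Proof. revert u hh vis. induction j; intros u hh vis E.
  - unfold rn in E; simpl in E. injection E; intros; subst. unfold pos, rn; simpl. auto.
  - destruct (run_step _ _ _ _ E) as (u' & hh0 & vis0 & p & E1 & E2 & E3 & E4 & E5 & E6).
    destruct (IHj _ _ _ E1) as [IH1 IH2]. split.
    + rewrite E6, IH1, (seq_S (S j)), map_app, Nat.add_0_l. f_equal. simpl. f_equal. unfold pos; rewrite E. auto.
    + unfold pos; rewrite E; auto. Qed.

Lemma pos_lt j : v < n -> rn j <> None -> pos j < n.
Proof. intro Hv. induction j; intro H. unfold pos, rn; simpl; auto.
  destruct (pos_S j H) as [E1 E2]. rewrite E1. apply pg_nbr_lt; auto.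
  apply IHj. apply (run_some_le j (S j)); auto. Qed.

End Run.

Section Code.
Variables (h m : nat) (Hh : 2 <= h) (Hm : 4 <= m) (He : Nat.even m = true).
Variables (A : algorithm).

Definition codef phi u p := if u <? m then (if p =? cc h phi u then 0 else if p =? cc h phi (pr m u) then 1 else 2 + kidx h m phi u p)
  else (if p <? m then 2 + kport h m phi p (u - m) else 2).

Definition GG phi := mkG h m phi Hh Hm He.

Lemma codef_path0 phi u p : u < m -> codef phi u p = 0 -> p = cc h phi u.
Proof. intros Hu; unfold codef; rewrite (proj2 (Nat.ltb_lt _ _)) by auto.
  destruct (p =? cc h phi u) eqn:E1; [apply Nat.eqb_eq in E1; auto|].
  destruct (p =? cc h phi (pr m u)); discriminate. Qed.
Lemma codef_path1 phi u p : u < m -> codef phi u p = 1 -> p = cc h phi (pr m u) /\ p <> cc h phi u.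
Proof. intros Hu; unfold codef; rewrite (proj2 (Nat.ltb_lt _ _)) by auto.
  destruct (p =? cc h phi u) eqn:E1; [discriminate|apply Nat.eqb_neq in E1].
  destruct (p =? cc h phi (pr m u)) eqn:E2; [apply Nat.eqb_eq in E2; auto|discriminate]. Qed.
Lemma codef_path2 phi u p : u < m -> 2 <= codef phi u p -> special h m phi u p /\ codef phi u p = 2 + kidx h m phi u p.
Proof. intros Hu; unfold codef, special; rewrite (proj2 (Nat.ltb_lt _ _)) by auto.
  destruct (p =? cc h phi u) eqn:E1; [simpl; lia|apply Nat.eqb_neq in E1].
  destruct (p =? cc h phi (pr m u)) eqn:E2; [simpl; lia|apply Nat.eqb_neq in E2]. auto. Qed.
Lemma codef_path phi u p : u < m -> codef phi u p = 0 \/ codef phi u p = 1 \/ 2 <= codef phi u p.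
Proof. intros; lia. Qed.
Lemma codef_K phi u p : m <= u -> 2 <= codef phi u p.
Proof. intros Hu; unfold codef; rewrite (proj2 (Nat.ltb_ge _ _)) by auto. destruct (p <? m); lia. Qed.
Lemma codef_Kpath phi u p : m <= u -> p < m -> codef phi u p = 2 + kport h m phi p (u - m).
Proof. intros Hu Hp; unfold codef; rewrite (proj2 (Nat.ltb_ge _ _)), (proj2 (Nat.ltb_lt _ _)) by auto. auto. Qed.

Lemma local_eq phi1 phi2 u p : u < nn h m -> p < degf h m u -> codef phi1 u p = codef phi2 u p ->
  nbrf h m phi1 u p = nbrf h m phi2 u p /\ bportf h m phi1 u p = bportf h m phi2 u p.
Proof. intros Hu Hp Hc. destruct (Nat.lt_ge_cases u m) as [Hu'|Hu'].
  - destruct (codef_path phi1 u p Hu') as [C|[C|C]].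
    + pose proof (codef_path0 phi1 u p Hu' C) as E1. rewrite Hc in C. pose proof (codef_path0 phi2 u p Hu' C) as E2.
      rewrite E1 at 1 3. rewrite E2 at 1 2. rewrite (nbrf_path_sc h m phi1), (nbrf_path_sc h m phi2),
        (bportf_path_sc h m phi1), (bportf_path_sc h m phi2) by auto. split; congruence.
    + destruct (codef_path1 phi1 u p Hu' C) as [E1 _]. rewrite Hc in C. destruct (codef_path1 phi2 u p Hu' C) as [E2 _].
      rewrite E1 at 1 3. rewrite E2 at 1 2. rewrite (nbrf_path_pr h m phi1), (nbrf_path_pr h m phi2),
        (bportf_path_pr h m phi1), (bportf_path_pr h m phi2) by auto. split; congruence.
    + destruct (codef_path2 phi1 u p Hu' C) as [S1 E1]. rewrite Hc in C. destruct (codef_path2 phi2 u p Hu' C) as [S2 E2].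
      rewrite (nbrf_path_K h m phi1), (nbrf_path_K h m phi2), (bportf_path_K h m phi1), (bportf_path_K h m phi2) by auto.
      split; auto. lia.
  - destruct (Nat.lt_ge_cases p m).
    + rewrite (nbrf_K_path h m phi1), (nbrf_K_path h m phi2), (bportf_K_path h m phi1), (bportf_K_path h m phi2) by auto.
      rewrite (codef_Kpath phi1), (codef_Kpath phi2) in Hc by auto. split; auto; lia.
    + rewrite (nbrf_K_K h m phi1), (nbrf_K_K h m phi2), (bportf_K_K h m phi1), (bportf_K_K h m phi2) by auto. auto. Qed.

Definition rnG phi adv j := rn (nn h m) (GG phi) A adv 0 j.
Definition posG phi adv j := pos (nn h m) (GG phi) A adv 0 j.
Definition portG phi adv j := port (nn h m) (GG phi) A adv 0 j.
Definition codeG phi adv j := codef phi (posG phi adv j) (portG phi adv j).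

Lemma sim phi1 phi2 adv k : rnG phi1 adv k <> None ->
  (forall j, j < k -> codeG phi1 adv j = codeG phi2 adv j) ->
  forall j, j <= k -> rnG phi1 adv j = rnG phi2 adv j.
Proof. intros Hk Hc. induction j; intro Hj. reflexivity.
  assert (IH := IHj ltac:(lia)). specialize (Hc j ltac:(lia)).
  assert (Hs : rnG phi1 adv (S j) <> None) by (apply (run_some_le _ _ _ _ _ (S j) k); auto).
  assert (Hu : posG phi1 adv j < nn h m).
  { apply pos_lt. unfold nn, ss; lia. apply (run_some_le _ _ _ _ _ j k); auto; lia. }
  unfold codeG, posG, portG, pos, port in Hc, Hu. fold (rnG phi1 adv j) in Hc, Hu. fold (rnG phi2 adv j) in Hc.
  unfold rnG, rn in *. simpl run. simpl run in Hs.
  rewrite <- IH in Hc |- *. destruct (run A adv (GG phi1) 0 j) as [[[u hh] vis]|]; [|congruence].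
  simpl in Hc. destruct (A adv (degf h m 0) hh) as [|p]; [congruence|].
  destruct (p <? degf h m u) eqn:Ep; [|congruence]. apply Nat.ltb_lt in Ep.
  destruct (local_eq phi1 phi2 u p Hu Ep Hc) as [E1 E2].
  rewrite E1, E2. reflexivity. Qed.

End Code.

Section Inj.
Variables (h m : nat) (Hh : 2 <= h) (Hm : 4 <= m) (He : Nat.even m = true).
Variables (A : algorithm).

Notation codeG := (codeG h m Hh Hm He A).
Notation posG := (posG h m Hh Hm He A).
Notation portG := (portG h m Hh Hm He A).
Notation rnG := (rnG h m Hh Hm He A).

Definition travw phi adv i j := orb (andb (codeG phi adv j =? 0) (posG phi adv j =? i)) (andb (codeG phi adv j =? 1) (pr m (posG phi adv j) =? i)).
Definition trav phi adv k i := existsb (travw phi adv i) (seq 0 k).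
Definition unrev phi adv k := map (fun i => nth i phi 0) (filter (fun i => negb (trav phi adv k i)) (seq 0 m)).
Definition codes phi adv k := map (codeG phi adv) (seq 0 k).

Lemma travw_cc phi adv i j : travw phi adv i j = true -> portG phi adv j = cc h phi i.
Proof. unfold travw. intro H. apply Bool.orb_true_iff in H. destruct H as [H|H]; apply Bool.andb_true_iff in H; destruct H as [H1 H2];
  apply Nat.eqb_eq in H1; apply Nat.eqb_eq in H2.
  - assert (posG phi adv j < m). { destruct (Nat.lt_ge_cases (posG phi adv j) m); auto.
      unfold codeG in H1. pose proof (codef_K h m Hh Hm phi _ (portG phi adv j) H); lia. }
    unfold codeG in H1. apply codef_path0 in H1; auto. subst; auto.
  - assert (posG phi adv j < m). { destruct (Nat.lt_ge_cases (posG phi adv j) m); auto.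
      unfold codeG in H1. pose proof (codef_K h m Hh Hm phi _ (portG phi adv j) H); lia. }
    unfold codeG in H1. apply codef_path1 in H1; auto. destruct H1; subst; auto. Qed.

Lemma filter_map_eq (f g : nat -> nat) (P : nat -> bool) l :
  map f (filter P l) = map g (filter P l) -> forall i, In i l -> P i = true -> f i = g i.
Proof. induction l as [|a l IH]; simpl; [tauto|]. intros H i Hi Hp. destruct (P a) eqn:Ea; simpl in H.
  - injection H as H1 H2. destruct Hi as [<-|Hi]; auto.
  - destruct Hi as [<-|Hi]; [congruence| auto]. Qed.

Lemma nth_map_seq (f : nat -> nat) k j d : j < k -> nth j (map f (seq 0 k)) d = f j.
Proof. intro Hj. rewrite (nth_indep _ d (f 0)) by (rewrite length_map, length_seq; lia).
  rewrite map_nth, seq_nth by lia. auto. Qed.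

Lemma existsb_ext_in (f g : nat -> bool) l : (forall x, In x l -> f x = g x) -> existsb f l = existsb g l.
Proof. induction l; simpl; auto. intro H. rewrite H, IHl; auto. Qed.

Definition valid phi := length phi = m /\ Forall (fun x => x < h) phi.

Lemma cc_inj phi1 phi2 i : valid phi1 -> valid phi2 -> i < m -> cc h phi1 i = cc h phi2 i -> nth i phi1 0 = nth i phi2 0.
Proof. intros [L1 F1] [L2 F2] Hi E. unfold cc in E.
  assert (nth i phi1 0 < h) by (apply (proj1 (Forall_forall _ _) F1); apply nth_In; lia).
  assert (nth i phi2 0 < h) by (apply (proj1 (Forall_forall _ _) F2); apply nth_In; lia).
  rewrite !Nat.mod_small in E by auto. destruct (Nat.even i); lia. Qed.

Theorem inj phi1 phi2 adv k : valid phi1 -> valid phi2 -> rnG phi1 adv k <> None ->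
  codes phi1 adv k = codes phi2 adv k -> unrev phi1 adv k = unrev phi2 adv k -> phi1 = phi2.
Proof. intros V1 V2 Hk Hc Hu.
  assert (Hcj : forall j, j < k -> codeG phi1 adv j = codeG phi2 adv j).
  { intros j Hj. assert (E := f_equal (fun l => nth j l 0) Hc). unfold codes in E. simpl in E.
    rewrite !nth_map_seq in E by lia. auto. }
  assert (Hr := sim h m Hh Hm He A phi1 phi2 adv k Hk Hcj).
  assert (Hp : forall j, j <= k -> posG phi1 adv j = posG phi2 adv j /\ portG phi1 adv j = portG phi2 adv j).
  { intros j Hj. specialize (Hr j Hj). unfold posG, portG, pos, port. unfold rnG in Hr. rewrite Hr. auto. }
  assert (Hw : forall i j, j < k -> travw phi1 adv i j = travw phi2 adv i j).
  { intros i j Hj. unfold travw. rewrite Hcj by auto. rewrite (proj1 (Hp j ltac:(lia))). auto. }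
  assert (Ht : forall i, trav phi1 adv k i = trav phi2 adv k i).
  { intro i. unfold trav. apply existsb_ext_in. intros j Hj. apply in_seq in Hj. apply Hw; lia. }
  destruct V1 as [L1 F1], V2 as [L2 F2].
  apply (nth_ext _ _ 0 0). congruence. intros i Hi. rewrite L1 in Hi.
  destruct (trav phi1 adv k i) eqn:Ti.
  - unfold trav in Ti. apply existsb_exists in Ti. destruct Ti as [j [Hj Tj]]. apply in_seq in Hj.
    assert (Tj2 : travw phi2 adv i j = true) by (rewrite <- Hw by lia; auto).
    apply travw_cc in Tj, Tj2. apply cc_inj; try split; auto. rewrite <- Tj, <- Tj2. apply Hp; lia.
  - unfold unrev in Hu. rewrite (filter_ext (fun i => negb (trav phi2 adv k i)) (fun i => negb (trav phi1 adv k i))) in Hu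
      by (intro; rewrite Ht; auto).
    apply (filter_map_eq _ _ _ _ Hu). apply in_seq; lia. rewrite Ti; auto. Qed.

End Inj.

Definition cnt (P : nat -> bool) l := length (filter P l).

Lemma cnt_mono (P Q : nat -> bool) l : (forall x, In x l -> P x = true -> Q x = true) -> cnt P l <= cnt Q l.
Proof. unfold cnt; induction l as [|a l IH]; simpl; auto. intro H.
  destruct (P a) eqn:Pa. rewrite (H a (or_introl eq_refl) Pa). simpl. apply le_n_S, IH; auto.
  destruct (Q a); simpl; [apply le_S|]; apply IH; auto. Qed.
Lemma cnt_or (P Q : nat -> bool) l : cnt (fun x => orb (P x) (Q x)) l <= cnt P l + cnt Q l.
Proof. unfold cnt; induction l as [|a l IH]; simpl; auto. destruct (P a), (Q a); simpl; lia. Qed.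
Lemma cnt_compl (P : nat -> bool) l : cnt P l + cnt (fun x => negb (P x)) l = length l.
Proof. unfold cnt; induction l as [|a l IH]; simpl; auto. destruct (P a); simpl; lia. Qed.
Lemma cnt_shift (P : nat -> bool) k : cnt (fun j => P (S j)) (seq 0 k) <= cnt P (seq 0 (S k)).
Proof. unfold cnt. change (seq 0 (S k)) with (0 :: seq 1 k). cbn [filter]. rewrite <- seq_shift, filter_map_swap.
  destruct (P 0); simpl; rewrite length_map; lia. Qed.
Lemma cnt_S (P : nat -> bool) y : cnt P (seq 0 (S y)) = cnt P (seq 0 y) + (if P y then 1 else 0).
Proof. unfold cnt. rewrite seq_S, filter_app, length_app. simpl. destruct (P y); simpl; lia. Qed.
Lemma cnt_le_len (P : nat -> bool) l : cnt P l <= length l.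
Proof. pose proof (cnt_compl P l); lia. Qed.

Section Count.
Variables (h m : nat) (Hh : 2 <= h) (Hm : 4 <= m) (He : Nat.even m = true).
Variables (A : algorithm) (phi : list nat) (adv : advice) (k : nat).
Hypothesis Hrun : rnG h m Hh Hm He A phi adv k <> None.
Hypothesis Hall : forall x, x < nn h m -> exists j, j <= k /\ posG h m Hh Hm He A phi adv j = x.

Notation P j := (posG h m Hh Hm He A phi adv j).
Notation C j := (codeG h m Hh Hm He A phi adv j).
Notation T := (trav h m Hh Hm He A phi adv k).

Definition R0 := cnt (fun j => m <=? P j) (seq 0 (S k)).

Lemma rn_le j : j <= k -> rnG h m Hh Hm He A phi adv j <> None.
Proof. intro; apply (run_some_le _ _ _ _ _ j k); auto. Qed.

Lemma P_S j : j < k -> P (S j) = nbrf h m phi (P j) (portG h m Hh Hm He A phi adv j) /\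
   portG h m Hh Hm He A phi adv j < degf h m (P j).
Proof. intro Hj. apply (pos_S _ (GG h m Hh Hm He phi) A adv 0 j). exact (rn_le (S j) ltac:(lia)). Qed.

Lemma P_lt j : j <= k -> P j < nn h m.
Proof. intro; apply pos_lt. unfold nn, ss; lia. exact (rn_le j ltac:(lia)). Qed.

Lemma P_0 : P 0 = 0.
Proof. reflexivity. Qed.

Lemma R0_bound : R0 <= S k - m.
Proof. unfold R0.
  pose proof (cnt_compl (fun j => m <=? P j) (seq 0 (S k))) as E. rewrite length_seq in E.
  assert (m <= cnt (fun j => negb (m <=? P j)) (seq 0 (S k))).
  { unfold cnt. rewrite <- (length_map (fun j => P j)). rewrite <- (length_seq m 0) at 1.
    apply NoDup_incl_length. apply seq_NoDup. intros x Hx. apply in_seq in Hx.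
    destruct (Hall x ltac:(unfold nn; lia)) as [j [Hj Ej]]. apply in_map_iff. exists j. split; auto.
    apply filter_In. split. apply in_seq; lia. rewrite Ej. apply Bool.negb_true_iff, Nat.leb_gt; lia. }
  lia. Qed.

Lemma code_bound j : j < k -> C j < 2 + 2 * h.
Proof. intro Hj. destruct (P_S j Hj) as [E1 E2]. pose proof (P_lt j ltac:(lia)) as Hl. unfold codeG.
  destruct (Nat.lt_ge_cases (P j) m) as [Hp|Hp].
  - rewrite (degf_path h m) in E2 by auto. destruct (codef_path h m Hh Hm phi (P j) (portG h m Hh Hm He A phi adv j) Hp) as [C0|[C0|C0]]; try lia.
    destruct (codef_path2 h m Hh Hm phi _ _ Hp C0) as [S1 E3]. rewrite E3.
    pose proof (kidx_lt h m phi Hh Hm He _ _ Hp E2 S1). unfold ss in *; lia.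
  - rewrite (degf_K h m) in E2 by auto. destruct (Nat.lt_ge_cases (portG h m Hh Hm He A phi adv j) m) as [Hq|Hq].
    + rewrite codef_Kpath by auto. pose proof (kport_lt h m phi Hh Hm He (portG h m Hh Hm He A phi adv j) (P j - m) Hq).
      unfold nn, ss in *. lia.
    + unfold codef. rewrite (proj2 (Nat.ltb_ge _ _)) by auto. rewrite (proj2 (Nat.ltb_ge _ _)) by auto. lia. Qed.

Lemma code2_K j : j < k -> 2 <= C j -> orb (m <=? P j) (m <=? P (S j)) = true.
Proof. intros Hj Hc. destruct (Nat.lt_ge_cases (P j) m) as [Hp|Hp].
  - destruct (P_S j Hj) as [E1 E2]. unfold codeG in Hc.
    destruct (codef_path2 h m Hh Hm phi _ _ Hp Hc) as [S1 E3]. rewrite E1.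
    rewrite (nbrf_path_K h m) by auto. apply Bool.orb_true_iff; right; apply Nat.leb_le; lia.
  - apply Bool.orb_true_iff; left; apply Nat.leb_le; lia. Qed.

Lemma specials_bound : cnt (fun j => 2 <=? C j) (seq 0 k) <= 2 * R0.
Proof. eapply Nat.le_trans. apply (cnt_mono _ (fun j => orb (m <=? P j) (m <=? P (S j)))).
  intros x Hx Hc. apply in_seq in Hx. apply Nat.leb_le in Hc. apply code2_K; auto; lia.
  eapply Nat.le_trans. apply cnt_or. unfold R0.
  pose proof (cnt_shift (fun j => m <=? P j) k).
  assert (cnt (fun j => m <=? P j) (seq 0 k) <= cnt (fun j => m <=? P j) (seq 0 (S k))) by (rewrite cnt_S; lia).
  lia. Qed.


Definition UT i := negb (T i).
Definition Uc := cnt UT (seq 0 m).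
Definition FF x := cnt UT (seq 0 x).
Definition Aval x := FF x mod Uc.
Definition Sl := Aval 0 :: map (fun j => Aval (P (S j))) (filter (fun j => andb (m <=? P j) (P (S j) <? m)) (seq 0 k)).

Lemma Aval_sc x : x < m -> T x = true -> Aval (sc m x) = Aval x.
Proof. intros Hx Tx. unfold Aval, sc. destruct (x + 1 =? m) eqn:E; [apply Nat.eqb_eq in E|apply Nat.eqb_neq in E].
  - assert (Hf : FF m = FF x) by (unfold FF; rewrite <- E, Nat.add_1_r, cnt_S; unfold UT; rewrite Tx; simpl; lia).
    unfold FF at 1. simpl. rewrite Nat.Div0.mod_0_l. fold (FF x). rewrite <- Hf. unfold FF, Uc. rewrite Nat.Div0.mod_same. auto.
  - unfold FF. rewrite Nat.add_1_r, cnt_S. unfold UT at 2. rewrite Tx. simpl. rewrite Nat.add_0_r. auto. Qed.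

Lemma T_witness x j : j < k -> travw h m Hh Hm He A phi adv x j = true -> T x = true.
Proof. intros Hj Hw. unfold trav. apply existsb_exists. exists j. split; auto. apply in_seq; lia. Qed.

Lemma In_Sl j : j <= k -> P j < m -> In (Aval (P j)) Sl.
Proof. induction j as [|i IH]; intros Hj Hp. rewrite P_0. left; auto.
  destruct (Nat.lt_ge_cases (P i) m) as [Hi|Hi].
  - destruct (P_S i ltac:(lia)) as [E1 E2]. 
    assert (Hc : C i = 0 \/ C i = 1).
    { unfold codeG. destruct (codef_path h m Hh Hm phi (P i) (portG h m Hh Hm He A phi adv i) Hi) as [C0|[C0|C0]]; auto.
      pose proof (code2_K i ltac:(lia) C0). apply Bool.orb_true_iff in H. destruct H as [H|H]; apply Nat.leb_le in H; lia. }
    destruct Hc as [Hc|Hc].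
    + pose proof Hc as Hc'. unfold codeG in Hc'. apply codef_path0 in Hc'; auto. rewrite Hc', (nbrf_path_sc h m) in E1 by auto.
      rewrite E1, Aval_sc; auto. apply IH; auto; lia.
      apply (T_witness _ i); [lia|]. unfold travw. rewrite Hc, !Nat.eqb_refl. auto.
    + pose proof Hc as Hc'. unfold codeG in Hc'. apply codef_path1 in Hc'; auto. destruct Hc' as [Hc' _].
      rewrite Hc', (nbrf_path_pr h m) in E1 by auto.
      assert (Tp : T (pr m (P i)) = true).
      { apply (T_witness _ i); [lia|]. unfold travw. rewrite Hc, !Nat.eqb_refl. apply Bool.orb_true_r. }
      rewrite E1. rewrite <- (Aval_sc (pr m (P i))), (sc_pr h m Hh Hm); auto. apply IH; auto; lia. apply (pr_lt h m Hh Hm); auto.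
  - right. apply in_map_iff. exists i. split; auto. apply filter_In. split. apply in_seq; lia.
    apply Bool.andb_true_iff; split; [apply Nat.leb_le|apply Nat.ltb_lt]; lia. Qed.

Lemma IVT y r : r <= FF y -> exists x, x <= y /\ FF x = r.
Proof. induction y as [|y IH]; intro H.
  - exists 0; unfold FF, cnt in *; simpl in *; split; lia.
  - assert (H0 : FF (S y) <= FF y + 1) by (unfold FF; rewrite cnt_S; destruct (UT y); lia).
    destruct (Nat.le_gt_cases r (FF y)) as [H1|H1].
    + destruct (IH H1) as [x [Hx Ex]]. exists x; split; auto.
    + exists (S y); split; auto; lia. Qed.

Lemma Uc_bound : Uc <= 1 + R0.
Proof.
  assert (Hin : forall r, r < Uc -> In r Sl).
  { intros r Hr. destruct (IVT m r ltac:(unfold FF, Uc in *; lia)) as [x [Hx Ex]].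
    assert (x <> m) by (intro; subst; unfold FF, Uc in *; lia).
    destruct (Hall x ltac:(unfold nn; lia)) as [j [Hj Ej]].
    replace r with (Aval (P j)). apply In_Sl; auto; lia.
    unfold Aval. rewrite Ej, Ex. apply Nat.mod_small; auto. }
  assert (Uc <= length Sl).
  { rewrite <- (length_seq Uc 0) at 1. apply NoDup_incl_length. apply seq_NoDup.
    intros r Hr. apply in_seq in Hr. apply Hin; lia. }
  assert (length Sl <= 1 + R0).
  { unfold Sl. simpl. rewrite length_map. apply le_n_S. unfold R0.
    eapply Nat.le_trans. fold (cnt (fun j => andb (m <=? P j) (P (S j) <? m)) (seq 0 k)).
    apply (cnt_mono _ (fun j => m <=? P j)). intros x _ Hx. apply Bool.andb_true_iff in Hx; tauto.
    rewrite cnt_S; lia. }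
  lia. Qed.

Lemma unrev_len : length (unrev h m Hh Hm He A phi adv k) = Uc.
Proof. unfold unrev, Uc, cnt. rewrite length_map. auto. Qed.

End Count.

Fixpoint bl (L : nat) : list (list bool) :=
  match L with 0 => [[]] | S L' => [] :: map (cons true) (bl L') ++ map (cons false) (bl L') end.

Lemma bl_len L : length (bl L) < 2 ^ (S L).
Proof. induction L; simpl; auto. rewrite length_app, !length_map. simpl in IHL. lia. Qed.
Lemma bl_in L (a : list bool) : length a <= L -> In a (bl L).
Proof. revert a; induction L; intros a Ha; destruct a as [|b a]; simpl in *; auto; try lia.
  right. apply in_or_app. destruct b; [left|right]; apply in_map; apply IHL; lia. Qed.

Fixpoint nl (B U : nat) : list (list nat) :=
  match U with 0 => [[]] | S U' => [] :: flat_map (fun x => map (cons x) (nl B U')) (seq 0 B) end.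

Lemma flat_map_len {X Y : Type} (f : X -> list Y) l M : (forall x, In x l -> length (f x) <= M) -> length (flat_map f l) <= length l * M.
Proof. induction l; simpl; auto. intro H. rewrite length_app. pose proof (H a (or_introl eq_refl)). 
  pose proof (IHl (fun x Hx => H x (or_intror Hx))). lia. Qed.

Lemma nl_len B U : length (nl B U) <= (S B) ^ U.
Proof. induction U; simpl; auto. eapply Nat.le_trans. apply le_n_S. apply (flat_map_len _ _ (S B ^ U)).
  intros. rewrite length_map. apply IHU. rewrite length_seq. pose proof (Nat.pow_nonzero (S B) U). nia. Qed.
Lemma nl_in B U l : length l <= U -> Forall (fun x => x < B) l -> In l (nl B U).
Proof. revert l; induction U; intros l Hl F; destruct l as [|x l]; simpl in *; auto; try lia.
  right. inversion F; subst. apply in_flat_map. exists x. split. apply in_seq; lia. apply in_map. apply IHU; auto; lia. Qed.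

Fixpoint sp (Bs len r : nat) : list (list nat) :=
  match len with
  | 0 => [[]]
  | S l => map (cons 0) (sp Bs l r) ++ map (cons 1) (sp Bs l r) ++
      match r with 0 => [] | S r' => flat_map (fun x => map (cons (2 + x)) (sp Bs l r')) (seq 0 Bs) end
  end.

Lemma sp_len Bs len : 1 <= Bs -> forall r, length (sp Bs len r) <= 2 ^ len * (S len) ^ r * Bs ^ r.
Proof. intro HB. induction len; intro r. simpl. rewrite Nat.pow_1_l. pose proof (Nat.pow_nonzero Bs r). lia.
  simpl sp. rewrite !length_app, !length_map. destruct r as [|r].
  - simpl. specialize (IHlen 0). simpl in IHlen. lia.
  - eapply Nat.le_trans. apply Nat.add_le_mono. apply IHlen. apply Nat.add_le_mono. apply IHlen. apply flat_map_len.
    intros. rewrite length_map. apply IHlen. rewrite length_seq.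
    assert (E1 : S len ^ r <= S (S len) ^ r) by (apply Nat.pow_le_mono_l; lia).
    rewrite !Nat.pow_succ_r'.
    set (X := 2 ^ len) in *. set (Y := S len ^ r) in *. set (Z := Bs ^ r) in *. set (Y' := S (S len) ^ r) in *.
    transitivity ((2*len+3) * (X*Y*(Bs*Z))). apply Nat.eq_le_incl; ring.
    transitivity ((2*len+4) * (X*Y'*(Bs*Z))). apply Nat.mul_le_mono. lia.
    apply Nat.mul_le_mono; [apply Nat.mul_le_mono|]; lia.
    apply Nat.eq_le_incl; ring. Qed.

Definition cnt2 := cnt (fun x => 2 <=? x).

Lemma cnt2_cons x l : cnt2 (x :: l) = (if 2 <=? x then 1 else 0) + cnt2 l.
Proof. unfold cnt2, cnt. simpl. destruct x as [|[|x]]; reflexivity. Qed.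

Lemma sp_in Bs len : forall r l, length l = len -> Forall (fun x => x < 2 + Bs) l -> cnt2 l <= r -> In l (sp Bs len r).
Proof. induction len; intros r l Hl F Hc; destruct l as [|x l]; simpl in Hl; try lia. simpl; auto.
  inversion F; subst. rewrite cnt2_cons in Hc. simpl sp.
  apply in_or_app. destruct x as [|[|x]].
  - left. apply in_map. apply IHlen; auto.
  - right. apply in_or_app. left. apply in_map. apply IHlen; auto.
  - right. apply in_or_app. right. simpl in Hc. destruct r as [|r]; [lia|].
    apply in_flat_map. exists x. split. apply in_seq; lia. apply in_map. apply IHlen; auto. lia. Qed.

Definition spU Bs K r := flat_map (fun len => sp Bs len r) (seq 0 (S K)).

Lemma spU_len Bs K r : 1 <= Bs -> length (spU Bs K r) <= S K * (2 ^ K * (S K) ^ r * Bs ^ r).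
Proof. intro HB. unfold spU. eapply Nat.le_trans. apply (flat_map_len _ _ (2 ^ K * (S K) ^ r * Bs ^ r)).
  intros len Hlen. apply in_seq in Hlen.
  eapply Nat.le_trans. apply sp_len; auto. apply Nat.mul_le_mono. apply Nat.mul_le_mono.
  apply Nat.pow_le_mono_r; lia. apply Nat.pow_le_mono_l; lia. apply le_n. rewrite length_seq. apply le_n. Qed.
Lemma spU_in Bs K r l : length l <= K -> Forall (fun x => x < 2 + Bs) l -> cnt2 l <= r -> In l (spU Bs K r).
Proof. intros. unfold spU. apply in_flat_map. exists (length l). split. apply in_seq; lia. apply sp_in; auto. Qed.

Fixpoint ex (h m : nat) : list (list nat) :=
  match m with 0 => [[]] | S m' => flat_map (fun x => map (cons x) (ex h m')) (seq 0 h) end.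

Lemma ex_len h m : length (ex h m) = h ^ m.
Proof. induction m; simpl; auto. rewrite <- IHm. generalize (ex h m). intro l.
  assert (forall xs, length (flat_map (fun x => map (cons x) l) xs) = length xs * length l).
  { induction xs; simpl; auto. rewrite length_app, length_map, IHxs. auto. }
  rewrite H, length_seq. auto. Qed.

Lemma ex_in h m l : In l (ex h m) <-> (length l = m /\ Forall (fun x => x < h) l).
Proof. revert l; induction m; intro l; simpl. split. intros [<-|[]]. auto. intros [H _]; destruct l; simpl in *; auto; lia.
  rewrite in_flat_map. split.
  - intros [x [Hx Hl]]. apply in_map_iff in Hl. destruct Hl as [l' [<- Hl']]. apply IHm in Hl'. apply in_seq in Hx.
    simpl. split. lia. constructor; [lia|tauto].
  - intros [Hl F]. destruct l as [|x l]; simpl in Hl; [lia|]. inversion F; subst. exists x. split. apply in_seq; lia.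
    apply in_map. apply IHm. split; auto. Qed.

Lemma ex_nodup h m : NoDup (ex h m).
Proof. induction m; simpl. constructor; auto; constructor.
  generalize (seq_NoDup h 0). generalize (seq 0 h). intro xs. induction xs as [|x xs IH]; intro Hn; simpl. constructor.
  inversion Hn; subst. apply NoDup_app. apply NoDup_map_NoDup_ForallPairs; auto. intros a b _ _ E; injection E; auto.
  apply IH; auto. intros a Ha Hb. apply in_map_iff in Ha. destruct Ha as [l [<- _]]. apply in_flat_map in Hb.
  destruct Hb as [y [Hy Hb]]. apply in_map_iff in Hb. destruct Hb as [l' [E _]]. injection E; intros; subst. auto. Qed.

Lemma count_inj {D : Type} (Phi : list nat -> D) (fam : list (list nat)) (S : list D) :
  NoDup fam -> (forall x y, In x fam -> In y fam -> Phi x = Phi y -> x = y) -> (forall x, In x fam -> In (Phi x) S) ->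
  length fam <= length S.
Proof. intros Hn Hi Hs. rewrite <- (length_map Phi). apply NoDup_incl_length.
  apply NoDup_map_NoDup_ForallPairs. intros x y Hx Hy E; apply Hi; auto. auto.
  intros d Hd. apply in_map_iff in Hd. destruct Hd as [x [<- Hx]]. auto. Qed.

Lemma final_ineq t h M n K L R : h = 2 ^ t -> M = h * h -> 10 <= t -> n = M + (2 * h - 2) ->
  64 * K <= 65 * n -> 32 * L <= n * (2 * t + 1) -> R = S K - M ->
  2 ^ (S L) * (S K * (2 ^ K * (S K) ^ (2 * R) * (2 * h) ^ (2 * R))) * (S h) ^ (S R) < h ^ M.
Proof. intros Hh HM Ht Hn HK HL HR.
  assert (H1024 : 1024 <= h) by (subst h; replace 1024 with (2 ^ 10) by reflexivity; apply Nat.pow_le_mono_r; lia).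
  assert (HM1 : 1024 * h <= M) by (subst M; nia).
  assert (HSK : S K <= 2 ^ (2 * t + 2)).
  { assert (E4 : 2 ^ (2 * t + 2) = 4 * M) by (subst M h; replace (2 * t + 2) with (t + t + 2) by lia;
      rewrite !Nat.pow_add_r; simpl; ring). lia. }
  assert (Hh2 : 2 * h = 2 ^ (S t)) by (subst h; reflexivity).
  assert (HSh : S h <= 2 ^ (S t)) by lia.
  assert (HhM : h ^ M = 2 ^ (t * M)) by (subst h; rewrite Nat.pow_mul_r; reflexivity).
  rewrite HhM.
  eapply Nat.le_lt_trans with (m := 2 ^ (S L) * (2 ^ (2 * t + 2) * (2 ^ K * (2 ^ (2 * t + 2)) ^ (2 * R) * (2 ^ (S t)) ^ (2 * R))) * (2 ^ (S t)) ^ (S R)).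
  { apply Nat.mul_le_mono. apply Nat.mul_le_mono. lia. apply Nat.mul_le_mono. auto.
    apply Nat.mul_le_mono. apply Nat.mul_le_mono. lia. apply Nat.pow_le_mono_l; auto. rewrite Hh2; lia.
    apply Nat.pow_le_mono_l; auto. }
  rewrite <- !Nat.pow_mul_r, <- !Nat.pow_add_r. apply Nat.pow_lt_mono_r. lia.
  set (Z := t * R). set (X := t * M). set (Y := t * h).
  assert (E : S L + (2 * t + 2 + (K + (2 * t + 2) * (2 * R) + S t * (2 * R))) + S t * S R =
     S L + 2 * t + 2 + K + 7 * Z + 7 * R + t + 1) by (unfold Z; ring).
  rewrite E.
  assert (HR1 : 448 * R <= 8 * M) by lia.
  assert (HZ : 448 * Z <= 8 * X) by (unfold Z, X; nia).
  assert (HXY : 1024 * Y <= X) by (unfold X, Y; nia).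
  assert (HX : 10 * M <= X) by (unfold X; nia).
  assert (Htn : n * (2 * t + 1) = 2 * X + 4 * Y - 4 * t + n) by (unfold X, Y; subst n; nia).
  assert (HtY : t <= Y) by (unfold Y; nia).
  lia. Qed.

Open Scope R_scope.

Lemma ln_le' x y : 0 < x -> x <= y -> ln x <= ln y.
Proof. intros Hx Hy. destruct (Rle_lt_or_eq_dec _ _ Hy) as [H|H]. left; apply ln_increasing; auto. subst; right; auto. Qed.
Lemma exp_le' x y : x <= y -> exp x <= exp y.
Proof. intros Hy. destruct (Rle_lt_or_eq_dec _ _ Hy) as [H|H]. left; apply exp_increasing; auto. subst; right; auto. Qed.

Lemma ln4_pos : 0 < ln 4.
Proof. rewrite <- ln_1. apply ln_increasing; lra. Qed.
Lemma ln2_pos : 0 < ln 2.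
Proof. rewrite <- ln_1. apply ln_increasing; lra. Qed.

Lemma Rp_bound (eps : R) (t n : nat) : eps < 1 -> 3 <= INR t * (1 - eps) -> (4 ^ t <= n)%nat ->
  Rpower (INR n) eps <= INR n / 64.
Proof. intros He Ht Hn.
  assert (Hn1 : (1 <= n)%nat) by (pose proof (Nat.pow_nonzero 4 t); lia).
  assert (Hnp : 0 < INR n) by (apply lt_0_INR; lia).
  assert (Hl : INR t * ln 4 <= ln (INR n)).
  { rewrite <- ln_pow by lra. apply ln_le'. apply pow_lt; lra.
    replace 4 with (INR 4) by (simpl; lra). rewrite <- pow_INR. apply le_INR; auto. }
  assert (H64 : ln 64 = 3 * ln 4).
  { replace 64 with (4 ^ 3) by lra. rewrite ln_pow by lra. simpl; lra. }
  pose proof ln4_pos.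
  assert (Hk : ln 64 <= (1 - eps) * ln (INR n)).
  { rewrite H64. apply Rle_trans with ((1 - eps) * (INR t * ln 4)).
    replace ((1 - eps) * (INR t * ln 4)) with ((INR t * (1 - eps)) * ln 4) by ring.
    apply Rmult_le_compat_r; lra. apply Rmult_le_compat_l; lra. }
  unfold Rpower. apply Rle_trans with (exp (ln (INR n) + - ln 64)).
  apply exp_le'. lra.
  rewrite exp_plus, exp_Ropp, !exp_ln by lra. unfold Rdiv. lra. Qed.

Lemma log_bound (n t : nat) : (1 <= n)%nat -> (n <= 2 ^ (2 * t + 1))%nat -> ln (INR n) / ln 2 <= INR (2 * t + 1).
Proof. intros H1 H2. pose proof ln2_pos.
  assert (ln (INR n) <= INR (2 * t + 1) * ln 2).
  { rewrite <- ln_pow by lra. apply ln_le'. apply lt_0_INR; lia.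
    replace 2 with (INR 2) by (simpl; lra). rewrite <- pow_INR. apply le_INR; auto. }
  apply Rmult_le_reg_r with (ln 2); auto. unfold Rdiv. rewrite Rmult_assoc, Rinv_l by lra. lra. Qed.

Lemma choose_t (eps : R) (B : nat) : eps < 1 -> exists t, (B <= t)%nat /\ 3 <= INR t * (1 - eps).
Proof. intro He. destruct (INR_unbounded (3 / (1 - eps))) as [t0 Ht0]. exists (Nat.max B t0). split. lia.
  assert (INR t0 <= INR (Nat.max B t0)) by (apply le_INR; lia).
  apply Rle_trans with (3 / (1 - eps) * (1 - eps)). right; field; lra.
  apply Rmult_le_compat_r; lra. Qed.

Lemma h_facts t : (1 <= t)%nat -> (2 <= 2 ^ t)%nat /\ (4 <= 2 ^ t * 2 ^ t)%nat /\ Nat.even (2 ^ t * 2 ^ t) = true.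
Proof. intro Ht. assert (H2 : (2 <= 2 ^ t)%nat) by (replace 2%nat with (2 ^ 1)%nat at 1 by reflexivity; apply Nat.pow_le_mono_r; lia).
  split; auto. split. nia. rewrite Nat.even_mul. replace t with (S (t - 1)) by lia. rewrite Nat.pow_succ_r'.
  rewrite Nat.even_mul. reflexivity. Qed.

Lemma cnt2_codes h m Hh Hm He A phi adv k :
  cnt2 (codes h m Hh Hm He A phi adv k) = cnt (fun j => 2 <=? codeG h m Hh Hm He A phi adv j) (seq 0 k).
Proof. unfold cnt2, cnt, codes. rewrite filter_map_swap, length_map. reflexivity. Qed.

Theorem mainTheorem13 :
  forall (eps : R), eps < 1 ->
  forall f : oracle, advice_o_nlogn f ->
  forall A : algorithm,
  forall N : nat, exists n : nat, (N <= n)%nat /\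
    exists (G : pgraph n) (v : nat), (v < n)%nat /\ hamiltonian G /\
      forall k : nat, explores_in A (f n G v) G v k ->
        INR k >= INR n + Rpower (INR n) eps.
Proof.
  intros eps Heps f Hf A N.
  destruct (Hf (1/32) ltac:(lra)) as [N0 HN0].
  destruct (choose_t eps (N + N0 + 10) Heps) as [t [Ht1 Ht2]].
  destruct (h_facts t ltac:(lia)) as [Hh [Hm He]].
  set (h := (2 ^ t)%nat) in *. set (m := (h * h)%nat) in *.
  set (n := nn h m).
  assert (Htt : (t < h)%nat) by (apply Nat.pow_gt_lin_r; lia).
  assert (Hn : (n = m + (2 * h - 2))%nat) by reflexivity.
  assert (Hmn : (4 ^ t <= n)%nat) by (replace (4 ^ t)%nat with m by (unfold m, h; rewrite <- Nat.pow_mul_l; reflexivity); lia).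
  assert (Hn2 : (n <= 2 ^ (2 * t + 1))%nat).
  { replace (2 ^ (2 * t + 1))%nat with (2 * m)%nat by (unfold m, h; replace (2 * t + 1)%nat with (t + t + 1)%nat by lia;
      rewrite !Nat.pow_add_r; simpl; ring). unfold m in *. nia. }
  exists n. split. nia.
  destruct (Classical_Prop.classic (exists phi, In phi (ex h m) /\ forall k, explores_in A (f n (GG h m Hh Hm He phi) 0%nat) (GG h m Hh Hm He phi) 0%nat k -> INR k >= INR n + Rpower (INR n) eps)) as [[phi [_ Hphi]]|Hno].
  { exists (GG h m Hh Hm He phi), 0%nat. split. unfold n, nn, ss; lia. split. apply mkG_ham. auto. }
  exfalso.
  assert (Hq : forall phi, exists k, In phi (ex h m) -> explores_in A (f n (GG h m Hh Hm He phi) 0%nat) (GG h m Hh Hm He phi) 0%nat k /\ INR k < INR n + Rpower (INR n) eps).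
  { intro phi. destruct (Classical_Prop.classic (In phi (ex h m))) as [Hin|Hin]; [|exists 0%nat; tauto].
    destruct (Classical_Prop.classic (exists k, explores_in A (f n (GG h m Hh Hm He phi) 0%nat) (GG h m Hh Hm He phi) 0%nat k /\ INR k < INR n + Rpower (INR n) eps)) as [[k Hk]|Hk].
    exists k; auto. exfalso. apply Hno. exists phi. split; auto. intros k Ek. apply Rnot_lt_ge. intro Hlt. apply Hk. exists k; auto. }
  set (kf := fun phi => proj1_sig (IndefiniteDescription.constructive_indefinite_description _ (Hq phi))).
  assert (Hkf : forall phi, In phi (ex h m) -> explores_in A (f n (GG h m Hh Hm He phi) 0%nat) (GG h m Hh Hm He phi) 0%nat (kf phi) /\ INR (kf phi) < INR n + Rpower (INR n) eps).
  { intros phi Hin. unfold kf. destruct (IndefiniteDescription.constructive_indefinite_description _ (Hq phi)) as [k Hk]. simpl. auto. }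
  set (adv := fun phi => f n (GG h m Hh Hm He phi) 0%nat).
  set (L := (n * (2 * t + 1) / 32)%nat). set (K := (65 * n / 64)%nat). set (R0m := (S K - m)%nat).
  set (Phi := fun phi => (adv phi, (codes h m Hh Hm He A phi (adv phi) (kf phi), unrev h m Hh Hm He A phi (adv phi) (kf phi)))).
  set (Sd := list_prod (bl L) (list_prod (spU (2 * h) K (2 * R0m)) (nl h (S R0m)))).
  assert (Hfacts : forall phi, In phi (ex h m) ->
     rnG h m Hh Hm He A phi (adv phi) (kf phi) <> None /\
     (forall x, (x < nn h m)%nat -> exists j, (j <= kf phi)%nat /\ posG h m Hh Hm He A phi (adv phi) j = x) /\
     (64 * kf phi < 65 * n)%nat /\ (32 * length (adv phi) <= n * (2 * t + 1))%nat).
  { intros phi Hin. destruct (Hkf phi Hin) as [[u [hh [vis [Er [_ Hv]]]]] Hlt].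
    split. unfold rnG, rn, adv. rewrite Er. discriminate.
    split. intros x Hx. specialize (Hv x Hx). destruct (vis_pos _ _ _ _ _ _ _ _ _ Er) as [Ev _]. rewrite Ev in Hv.
      apply in_map_iff in Hv. destruct Hv as [j [Ej Hj]]. apply in_seq in Hj. exists j. split. lia. auto.
    split. pose proof (Rp_bound eps t n Heps Ht2 Hmn).
      assert (INR (64 * kf phi) < INR (65 * n)) by (rewrite !mult_INR; simpl; lra). apply INR_lt; auto.
    assert (Ha := HN0 n ltac:(lia) (GG h m Hh Hm He phi) 0%nat ltac:(unfold n, nn, ss; lia)).
    pose proof (log_bound n t ltac:(unfold n, nn, ss; lia) Hn2).
    assert (INR (32 * length (adv phi)) <= INR (n * (2 * t + 1))).
    { rewrite !mult_INR. unfold adv. set (X := ln (INR n) / ln 2) in *.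
      replace (INR 32) with 32 by (simpl; lra). pose proof (pos_INR n).
      apply Rle_trans with (32 * (1/32 * INR n * X)). lra.
      replace (32 * (1 / 32 * INR n * X)) with (INR n * X) by field.
      apply Rmult_le_compat_l; auto. }
    apply INR_le; auto. }
  assert (Hcount : (length (ex h m) <= length Sd)%nat).
  { apply (count_inj Phi). apply ex_nodup.
    - intros x y Hx Hy E. unfold Phi in E. injection E as Ea Ec Eu.
      assert (Ek : kf x = kf y) by (apply (f_equal (@length nat)) in Ec; unfold codes in Ec; rewrite !length_map, !length_seq in Ec; auto).
      rewrite <- Ea, <- Ek in Ec, Eu.
      apply (inj h m Hh Hm He A x y (adv x) (kf x)); auto; try (apply ex_in; auto). apply Hfacts; auto.
    - intros x Hx. destruct (Hfacts x Hx) as [Hr [Hall [Hk Ha]]]. unfold Phi, Sd. apply in_prod.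
      apply bl_in. unfold L. apply Nat.div_le_lower_bound; lia.
      assert (HkK : (kf x <= K)%nat) by (unfold K; apply Nat.div_le_lower_bound; lia).
      pose proof (R0_bound h m Hh Hm He A x (adv x) (kf x) Hall) as HR0.
      apply in_prod.
      + apply spU_in. unfold codes; rewrite length_map, length_seq; auto.
        apply Forall_forall. intros c Hc. unfold codes in Hc. apply in_map_iff in Hc. destruct Hc as [j [<- Hj]].
        apply in_seq in Hj. apply (code_bound h m Hh Hm He A x (adv x) (kf x) Hr); lia.
        rewrite cnt2_codes. pose proof (specials_bound h m Hh Hm He A x (adv x) (kf x) Hr). unfold R0m. lia.
      + apply nl_in. rewrite unrev_len. pose proof (Uc_bound h m Hh Hm He A x (adv x) (kf x) Hr Hall). unfold R0m. lia.
        apply Forall_forall. intros c Hc. unfold unrev in Hc. apply in_map_iff in Hc. destruct Hc as [i [<- Hi]].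
        apply filter_In in Hi. destruct Hi as [Hi _]. apply in_seq in Hi. apply ex_in in Hx. destruct Hx as [Hl F].
        apply (proj1 (Forall_forall _ _) F). apply nth_In. lia. }
  unfold Sd in Hcount. rewrite ex_len, !length_prod in Hcount.
  pose proof (bl_len L). pose proof (spU_len (2 * h) K (2 * R0m) ltac:(lia)). pose proof (nl_len h (S R0m)).
  assert (Hfin := final_ineq t h m n K L R0m eq_refl eq_refl ltac:(lia) Hn ltac:(unfold K; apply Nat.Div0.mul_div_le)
    ltac:(unfold L; apply Nat.Div0.mul_div_le) eq_refl).
  assert (length (bl L) * (length (spU (2 * h) K (2 * R0m)) * length (nl h (S R0m))) <=
     2 ^ S L * (S K * (2 ^ K * S K ^ (2 * R0m) * (2 * h) ^ (2 * R0m))) * S h ^ S R0m)%nat.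
  { rewrite Nat.mul_assoc. apply Nat.mul_le_mono; [apply Nat.mul_le_mono|]; lia. }
  lia.
Qed.
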